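(* Let $A$ be a VPA. The languages $S_0=\sigma_0(D)$ and $S_1=\sigma_1(W\setminus\{\varepsilon\})$ are context-free.
   Context: VPA $A=(Q,\Sigma,\Gamma,\bot,q_0,\delta,F)$ over a pushdown alphabet $\Sigma=\Sigma_c\cup\Sigma_r\cup\Sigma_{\mathit{int}}$ (deterministic; call letters push a symbol of $\Gamma\setminus\{\bot\}$, internal letters change only the state, return letters pop the top symbol $\gamma\ne\bot$ and use it, or read $\bot$ without popping); configurations $\alpha q$, $\alpha\in\bot(\Gamma\setminus\{\bot\})^*$; $\delta(c,w)$ the configuration reached from $c$ on $w$; $\mathcal L(c)$ the set of words leading from $c$ to a state in $F$. Well-matched words $W$: smallest set containing $\varepsilon$ and $\Sigma_{\mathit{int}}$, closed under concatenation and under $w\mapsto awb$ ($a\in\Sigma_c$, $b\in\Sigma_r$). Descending words $D$: words factorizable into well-matched factors and return letters. $\varphi:W\to Q^Q$ is the homomorphism with $\delta(\alpha p,w)=\alpha\,\varphi(w)(p)$. $\mathrm{rConf}$: configurations reachable from $\bot q_0$; $\mathsf{rep}(c)$: length-lexicographically least (for fixed linear orders on $\Gamma,Q$) $c'\in\mathrm{rConf}$ with $\mathcal L(c')=\mathcal L(c)$; $\nu_A(w)=\mathsf{rep}(\delta(\bot q_0,w))$. For $w=a_1\cdots a_n\in D$ each suffix is descending and $\nu_A(a_i\cdots a_n)=\bot q_i$ for some $q_i\in Q$; $\sigma_0(w)=q_1\cdots q_n\in Q^*$; for nonempty $w\in W$, $\sigma_1(w)=\varphi(w)q_2\cdots q_n$,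 a word over the alphabet $Q\cup Q^Q$. *)

(* Defs.v *)
From mathcomp Require Import all_boot.
Set Implicit Arguments. Unset Strict Implicit. Unset Printing Implicit Defensive.

Record cfg (T : eqType) := CFG {
  nt : finType;
  start : nt;
  rules : seq (nt * seq (nt + T)%type) }.

Inductive derives (T : eqType) (g : cfg T) : seq (nt g + T)%type -> seq T -> Prop :=
| der_nil : @derives T g [::] [::]
| der_t (t : T) s w : @derives T g s w -> @derives T g (inr t :: s) (t :: w)
| der_nt (X : nt g) rhs s u w :
    (X, rhs) \in rules g -> @derives T g rhs u -> @derives T g s w ->
    @derives T g (inl X :: s) (u ++ w).

Definition generates (T : eqType) (g : cfg T) (w : seq T) : Prop :=
  @derives T g [:: inl (start g)] w.

Definition context_free (T : eqType) (L : seq T -> Prop) : Prop :=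
  exists g : cfg T, forall w, L w <-> generates g w.

Inductive letter_kind := Call | Ret | Int.

Inductive WM (Sigma : Type) (kind : Sigma -> letter_kind) : seq Sigma -> Prop :=
| WM_nil : @WM Sigma kind [::]
| WM_int a : kind a = Int -> @WM Sigma kind [:: a]
| WM_cat u v : @WM Sigma kind u -> @WM Sigma kind v -> @WM Sigma kind (u ++ v)
| WM_nest a u b : kind a = Call -> kind b = Ret -> @WM Sigma kind u ->
    @WM Sigma kind (a :: rcons u b).

Inductive Desc (Sigma : Type) (kind : Sigma -> letter_kind) : seq Sigma -> Prop :=
| D_nil : @Desc Sigma kind [::]
| D_wm u v : @WM Sigma kind u -> @Desc Sigma kind v -> @Desc Sigma kind (u ++ v)
| D_ret b v : kind b = Ret -> @Desc Sigma kind v -> @Desc Sigma kind (b :: v).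

(* ---------- Deterministic VPA ----------
   Stack alphabet Gamma = {bot} + G; G is Gamma \ {bot}.  A configuration
   alpha q with alpha = bot g_1 ... g_k is represented by ([:: g_1; ...; g_k], q)
   (top of stack = last element).  Transition functions are total on all
   letters, only the one matching the kind of the letter is used. *)
Record vpa (Sigma : finType) (kind : Sigma -> letter_kind) := VPA {
  Q : finType;
  G : finType;
  q0 : Q;
  final : {set Q};
  dcall : Q -> Sigma -> Q * G;
  dint  : Q -> Sigma -> Q;
  dret  : Q -> Sigma -> option G -> Q   (* return: top symbol, None = bot (not popped) *)
}.

Section VPA.
Variables (Sigma : finType) (kind : Sigma -> letter_kind) (A : vpa kind).

Definition config := (seq (G A) * Q A)%type.

Definition step (c : config) (a : Sigma) : config :=
  match kind a with
  | Call => let: (q', g) := dcall c.2 a in (rcons c.1 g, q')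
  | Int => (c.1, dint c.2 a)
  | Ret => match rev c.1 with
           | [::] => (c.1, dret c.2 a None)
           | g :: r => (rev r, dret c.2 a (Some g))
           end
  end.

Definition delta (c : config) (w : seq Sigma) : config := foldl step c w.

Definition init : config := ([::], q0 A).

Definition lang (c : config) (w : seq Sigma) : Prop := (delta c w).2 \in final A.

Definition same_lang (c c' : config) : Prop := forall w, lang c w <-> lang c' w.

Definition reachable (c : config) : Prop := exists w, delta init w = c.

Definition phi (w : seq Sigma) : {ffun Q A -> Q A} :=
  [ffun p => (delta ([::], p) w).2].

(* Length-lexicographic order on configurations (as words bot alpha q over
   Gamma u Q), for linear orders on G and Q given by injective ranks. *)
Variables (rkG : G A -> nat) (rkQ : Q A -> nat).

Fixpoint lex_le (s t : seq nat) : bool :=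
  match s, t with
  | [::], _ => true
  | _ :: _, [::] => false
  | x :: s', y :: t' => (x < y) || ((x == y) && lex_le s' t')
  end.

Definition enc (c : config) : seq nat := rcons (map rkG c.1) (rkQ c.2).

Definition llex_le (c c' : config) : bool :=
  (size c.1 < size c'.1) || ((size c.1 == size c'.1) && lex_le (enc c) (enc c')).

Definition is_rep (c r : config) : Prop :=
  [/\ reachable r, same_lang r c &
      forall r', reachable r' -> same_lang r' c -> llex_le r r'].

Definition is_sigma0 (w : seq Sigma) (s : seq (Q A)) : Prop :=
  size s = size w /\
  forall i, i < size w -> is_rep (delta init (drop i w)) ([::], nth (q0 A) s i).

Definition S0 (s : seq (Q A)) : Prop :=
  exists w, Desc kind w /\ is_sigma0 w s.

Definition S1 (t : seq (Q A + {ffun Q A -> Q A})%type) : Prop :=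
  exists w s, [/\ WM kind w, w <> [::], is_sigma0 w s &
                  t = inr (phi w) :: map inl (behead s)].

End VPA.

(* Main.v *)
Require Import Defs.
From mathcomp Require Import all_boot.
From Stdlib Require Import ClassicalEpsilon Classical.
Set Implicit Arguments. Unset Strict Implicit. Unset Printing Implicit Defensive.

Section Proof.
Variables (Sigma : finType) (kind : Sigma -> letter_kind) (A : vpa kind).
Variables (rkG : G A -> nat) (rkQ : Q A -> nat).
Hypothesis HrkQ : injective rkQ.

Notation delta := (@delta Sigma kind A).
Notation phi := (@phi Sigma kind A).
Notation step := (@step Sigma kind A).
Notation init := (@init Sigma kind A).

Lemma delta_cat c u v : delta c (u ++ v) = delta (delta c u) v.
Proof. by rewrite /Defs.delta foldl_cat. Qed.

Lemma delta_cons c a u : delta c (a :: u) = delta (step c a) u.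
Proof. by []. Qed.

Lemma delta_rcons c u b : delta c (rcons u b) = step (delta c u) b.
Proof. by rewrite -cats1 delta_cat. Qed.

Lemma step_call c a : kind a = Call ->
  step c a = (rcons c.1 (dcall c.2 a).2, (dcall c.2 a).1).
Proof. by move=> H; rewrite /Defs.step H; case: dcall. Qed.

Lemma step_ret_rcons al g p b : kind b = Ret ->
  step (rcons al g, p) b = (al, dret p b (Some g)).
Proof. by move=> H; rewrite /Defs.step H /= rev_rcons revK. Qed.

Lemma step_ret_nil p b : kind b = Ret ->
  step ([::], p) b = ([::], dret p b None).
Proof. by move=> H; rewrite /Defs.step H. Qed.

Lemma WM_inv u : WM kind u -> forall al p, delta (al, p) u = (al, (delta ([::], p) u).2).
Proof.
elim=> {u} [|a Ha|u v _ IHu _ IHv|a u b Ha Hb _ IH] al p //.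
- by rewrite /Defs.delta /= /Defs.step Ha.
- by rewrite !delta_cat IHu IHv [in RHS]IHu /= IHv.
- rewrite !delta_cons !delta_rcons !(step_call _ Ha) /= IH (IH [:: _]).
  by rewrite step_ret_rcons // (step_ret_rcons [::]).
Qed.

Fixpoint goodr (u : seq Sigma) : Prop :=
  match u with
  | [::] => True
  | a :: u' => (forall p, (delta ([::], p) (a :: u')).1 = [::]) /\ goodr u'
  end.

Lemma goodr_head u : goodr u -> forall p, (delta ([::], p) u).1 = [::].
Proof. by case: u => [|a u] //= [H _]. Qed.

Lemma goodr_cat u v : goodr u -> goodr v -> goodr (u ++ v).
Proof.
elim: u => [|a u IH] //= [H1 H2] Hv; split; last exact: IH.
move=> p; rewrite delta_cat.
by case E: (delta _ u) (H1 p) => [al q] /= ->; apply: goodr_head.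
Qed.

Lemma goodr1 b : (match kind b with Call => False | _ => True end) -> goodr [:: b].
Proof.
move=> H; split=> // p; rewrite /Defs.delta /= /Defs.step.
by case: (kind b) H.
Qed.

Lemma WM_good u : WM kind u -> goodr u.
Proof.
elim=> {u} [|a Ha|u v _ IHu _ IHv|a u b Ha Hb Hu IH] //.
- by apply: goodr1; rewrite Ha.
- exact: goodr_cat.
- split; last by rewrite -cats1; apply: goodr_cat => //; apply: goodr1; rewrite Hb.
  move=> p; move: (WM_inv (WM_nest Ha Hb Hu) [::] p); rewrite delta_cons => -> //.
Qed.

Lemma Desc_good u : Desc kind u -> goodr u.
Proof.
elim=> {u} [|u v Hu _ IH|b v Hb _ IH] //.
- by apply: goodr_cat => //; apply: WM_good.
- by apply: (@goodr_cat [:: b]) => //; apply: goodr1; rewrite Hb.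
Qed.


Definition idf : {ffun Q A -> Q A} := [ffun p => p].
Definition comp (C P : {ffun Q A -> Q A}) : {ffun Q A -> Q A} := [ffun p => C (P p)].

Lemma phi_cat u v : goodr u -> phi (u ++ v) = comp (phi v) (phi u).
Proof.
move=> Hu; apply/ffunP => p; rewrite !ffunE delta_cat.
by case E: (delta _ u) (goodr_head Hu p) => [al q] /= ->.
Qed.

Lemma phi_nil : phi [::] = idf.
Proof. by apply/ffunP => p; rewrite !ffunE. Qed.

Definition fr (p : Q A) : Q A :=
  epsilon (inhabits p) (fun q => is_rep rkG rkQ ([::], p) ([::], q)).

Lemma rep_exists p : reachable ([::], p) -> exists q, is_rep rkG rkQ ([::], p) ([::], q).
Proof.
move=> Hp.
pose cand q := reachable ([::], q) /\ same_lang ([::], q) ([::], p).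
suff H : forall n q, rkQ q < n -> cand q -> exists q', is_rep rkG rkQ ([::], p) ([::], q').
  by apply: (H (rkQ p).+1 p) => //; split.
elim=> [|n IH] q //= Hq Hc.
case: (classic (exists q', cand q' /\ rkQ q' < rkQ q)) => [[q' [Hc' Hlt]]|Hno].
  by apply: (IH q') => //; apply: leq_trans Hlt _.
exists q; case: Hc => Hr Hs; split=> // [[al q']] Hr' Hs'.
case: al Hr' Hs' => [|g al] Hr' Hs' //.
rewrite /llex_le /= /enc /=.
have: ~~ (rkQ q' < rkQ q).
  apply/negP => Hlt; apply: Hno; exists q'; split=> //.
by rewrite -leqNgt leq_eqVlt orbC andbT eq_sym.
Qed.

Lemma rep_unique c q1 q2 : is_rep rkG rkQ c ([::], q1) -> is_rep rkG rkQ c ([::], q2) -> q1 = q2.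
Proof.
move=> [H1 H2 H3] [H4 H5 H6].
have L1 := H3 _ H4 H5; have L2 := H6 _ H1 H2.
move: L1 L2; rewrite /llex_le /enc /= andbT => L1 L2.
apply: HrkQ; apply/eqP; rewrite eqn_leq.
rewrite andbT in L2.
have E1 : rkQ q1 <= rkQ q2 by rewrite leq_eqVlt orbC.
have E2 : rkQ q2 <= rkQ q1 by rewrite leq_eqVlt orbC.
by rewrite E1 E2.
Qed.

Lemma fr_spec p : reachable ([::], p) -> is_rep rkG rkQ ([::], p) ([::], fr p).
Proof.
move=> /rep_exists H; rewrite /fr.
exact: (epsilon_spec (inhabits p) (fun q => is_rep rkG rkQ ([::], p) ([::], q)) H).
Qed.

Fixpoint outs (C : {ffun Q A -> Q A}) (v : seq Sigma) : seq (Q A) :=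
  match v with
  | [::] => [::]
  | a :: v' => fr (C (phi (a :: v') (q0 A))) :: outs C v'
  end.

Lemma size_outs C v : size (outs C v) = size v.
Proof. by elim: v => //= a v ->. Qed.

Lemma outs_cat C u v : goodr u -> outs C (u ++ v) = outs (comp C (phi v)) u ++ outs C v.
Proof.
elim: u => [|a u IH] //= [H1 H2]; rewrite IH //; congr (_ :: _).
have Hg : goodr (a :: u) by split.
by rewrite -cat_cons (phi_cat _ Hg) !ffunE.
Qed.

Lemma goodr_drop w i : goodr w -> goodr (drop i w).
Proof. elim: w i => [|a w IH] [|i] Hw //=; exact: IH (proj2 Hw). Qed.

Lemma nth_outs C w i : goodr w -> i < size w ->
  nth (q0 A) (outs C w) i = fr (C (phi (drop i w) (q0 A))).
Proof.
elim: w i => [|a w IH] [|i] Hw Hi //=; exact: IH (proj2 Hw) Hi.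
Qed.

Lemma delta_init_drop w i : goodr w ->
  delta init (drop i w) = ([::], phi (drop i w) (q0 A)).
Proof.
move=> /(goodr_drop i) /goodr_head /(_ (q0 A)).
rewrite ffunE /init; case: delta => al q /= -> //.
Qed.

Lemma sigma0_iff w s : goodr w -> (is_sigma0 rkG rkQ w s <-> s = outs idf w).
Proof.
move=> Hw; split.
- case=> Hs Hn; apply: (@eq_from_nth _ (q0 A)); first by rewrite size_outs.
  move=> i; rewrite Hs => Hi; rewrite nth_outs // ffunE.
  apply: rep_unique (Hn i Hi) _.
  rewrite delta_init_drop //; apply: fr_spec.
  by rewrite -delta_init_drop //; exists (drop i w).
- move=> ->; split; first by rewrite size_outs.
  move=> i Hi; rewrite nth_outs // ffunE delta_init_drop //.
  apply: fr_spec; rewrite -delta_init_drop //; by exists (drop i w).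
Qed.


Definition isInt (a : Sigma) := if kind a is Int then true else false.
Definition isCall (a : Sigma) := if kind a is Call then true else false.
Definition isRet (a : Sigma) := if kind a is Ret then true else false.
Lemma isIntP a : isInt a -> kind a = Int. Proof. by rewrite /isInt; case: kind. Qed.
Lemma isCallP a : isCall a -> kind a = Call. Proof. by rewrite /isCall; case: kind. Qed.
Lemma isRetP a : isRet a -> kind a = Ret. Proof. by rewrite /isRet; case: kind. Qed.

Definition nestf (a : Sigma) (U : {ffun Q A -> Q A}) (b : Sigma) : {ffun Q A -> Q A} :=
  [ffun p => dret (U (dcall p a).1) b (Some (dcall p a).2)].

Lemma phi_nest a u b : WM kind u -> kind a = Call -> kind b = Ret ->
  phi (a :: rcons u b) = nestf a (phi u) b.
Proof.
move=> Hu Ha Hb; apply/ffunP => p; rewrite !ffunE delta_cons delta_rcons (step_call _ Ha) /=.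
by rewrite (WM_inv Hu) (step_ret_rcons [::]).
Qed.

Lemma outs_nest C a u b : WM kind u ->
  outs C (a :: rcons u b) = fr (C (phi (a :: rcons u b) (q0 A))) ::
     (outs (comp C (phi [:: b])) u ++ [:: fr (C (phi [:: b] (q0 A)))]).
Proof. by move=> Hu /=; rewrite -cats1 outs_cat //; apply: WM_good. Qed.

Section Grammar.
Variables (T' : eqType) (emb : Q A -> T').

Local Notation ntT := (option (bool * bool * {ffun Q A -> Q A} * {ffun Q A -> Q A})).
Local Notation code := ('I_6 * bool * bool * {ffun Q A -> Q A} * {ffun Q A -> Q A}
   * {ffun Q A -> Q A} * {ffun Q A -> Q A} * option Sigma * option Sigma)%type (only parsing).

Variable startrhs : {ffun Q A -> Q A} -> seq (ntT + T').
Variable Lstart : seq T' -> Prop.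

Definition hd (b : bool) (x : Q A) : seq (ntT + T') := if b then [::] else [:: inr (emb x)].
Definition ob (b : option Sigma) : seq Sigma := if b is Some b' then [:: b'] else [::].

Definition decode (r : code) : ntT * seq (ntT + T') :=
  let: (t, be, ka, P, C, P1, P2, a, b) := r in
  match val t with
  | 0 => (Some (false, ka, P, C), [::])
  | 1 => (Some (be, true, P, C), hd be (fr (C (P (q0 A)))))
  | 2 => (Some (be, ka, P, C), [:: inl (Some (be, true, P1, comp C P2)); inl (Some (false, ka, P2, C))])
  | 3 => (Some (be, true, P, C), hd be (fr (C (P (q0 A)))) ++
           [:: inl (Some (false, true, P1, comp C (phi (ob b)))); inr (emb (fr (C (phi (ob b) (q0 A)))))])
  | 4 => (Some (be, false, P, C), hd be (fr (C (P (q0 A)))) ++ [:: inl (Some (false, false, P1, C))])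
  | _ => (None, startrhs P)
  end.

Definition ok (r : code) : bool :=
  let: (t, be, ka, P, C, P1, P2, a, b) := r in
  match val t with
  | 0 => P == idf
  | 1 => if a is Some a' then isInt a' && (P == phi [:: a']) else false
  | 2 => P == comp P2 P1
  | 3 => match a, b with
         | Some a', Some b' => isCall a' && isRet b' && (P == nestf a' P1 b')
         | _, _ => false end
  | 4 => if b is Some b' then isRet b' && (P == comp P1 (phi [:: b'])) else false
  | _ => true
  end.

Definition rulesL : seq (ntT * seq (ntT + T')) := [seq decode r | r <- [seq r <- enum {: code} | ok r]].

Definition gram : cfg T' := @CFG T' ntT None rulesL.

Lemma rules_mem X rhs : (X, rhs) \in rulesL <-> exists r, ok r /\ decode r = (X, rhs).
Proof.
split.
- by case/mapP => r; rewrite mem_filter => /andP [Hr _] ->; exists r.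
- move=> [r [Hr <-]]; apply: map_f; by rewrite mem_filter Hr mem_enum.
Qed.

Lemma derives_cat s1 w1 s2 w2 : @derives T' gram s1 w1 -> @derives T' gram s2 w2 ->
  @derives T' gram (s1 ++ s2) (w1 ++ w2).
Proof.
move=> H1 H2; elim: H1 => //= [t s w _ IH|X rhs s u w Hr Hd _ _ IH].
- exact: der_t.
- rewrite -catA; exact (@der_nt T' gram X rhs (s ++ s2) u (w ++ w2) Hr Hd IH).
Qed.

Lemma derives_rule r u : ok r -> @derives T' gram (decode r).2 u -> @derives T' gram [:: inl (decode r).1] u.
Proof.
move=> Hr Hd; rewrite -[u]cats0.
have Hm : ((decode r).1, (decode r).2) \in rulesL.
  by apply/rules_mem; exists r; split=> //; case: (decode r).
exact (@der_nt T' gram _ _ [::] u [::] Hm Hd (@der_nil T' gram)).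
Qed.


Fixpoint sem (L : ntT -> seq T' -> Prop) (s : seq (ntT + T')) (w : seq T') : Prop :=
  match s with
  | [::] => w = [::]
  | inr t :: s' => exists w', w = t :: w' /\ sem L s' w'
  | inl X :: s' => exists u w', w = u ++ w' /\ L X u /\ sem L s' w'
  end.

Definition Lsem (X : ntT) (u : seq T') : Prop :=
  match X with
  | None => Lstart u
  | Some (be, ka, P, C) => exists v, (if ka then WM kind v else Desc kind v) /\ phi v = P /\
      (if be then v <> [::] /\ u = map emb (behead (outs C v)) else u = map emb (outs C v))
  end.

Lemma derives_sem L s w : (forall X rhs u, (X, rhs) \in rulesL -> sem L rhs u -> L X u) ->
  @derives T' gram s w -> sem L s w.
Proof.
move=> H; elim => //= [t s' w' _ IH | X rhs s' u w' Hr _ IH1 _ IH2].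
- by exists w'.
- by exists u, w'; split => //; split => //; exact: H Hr IH1.
Qed.

Lemma closure (Hstart : forall P u, sem Lsem (startrhs P) u -> Lstart u) X rhs u :
  (X, rhs) \in rulesL -> sem Lsem rhs u -> Lsem X u.
Proof.
case/rules_mem => [[[[[[[[[t be] ka] P] C] P1] P2] a] b]] [].
case: t => [[|[|[|[|[|n]]]]] Ht] /= Hok [<- <-].
-
  move=> ->; exists [::]; split; first by case: ka; constructor.
  by rewrite phi_nil (eqP Hok).
-
  case: a Hok => [a|] //; case/andP => /isIntP Ha /eqP -> Hs.
  exists [:: a]; split; first exact: WM_int.
  split=> //; case: be Hs => /=.
  + by move=> ->.
  + by move=> [w' [-> ->]].
-
  move=> [u1 [w1 [-> [[v1 [Hv1 [Hp1 Hu1]]] [u2 [w2 [-> [[v2 [Hv2 [Hp2 Hu2]]] ->]]]]]]]].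
  exists (v1 ++ v2); split; first by case: ka Hv2 => Hv2; [exact: WM_cat | exact: D_wm].
  have Hg1 := WM_good Hv1.
  rewrite phi_cat // Hp1 Hp2 (eqP Hok); split => //.
  rewrite outs_cat // Hp2 cats0 Hu2.
  case: be Hu1 => [[Hne ->]|->]; last by rewrite map_cat.
  split; first by case: v1 Hne {Hv1 Hp1 Hg1}.
  by case: v1 Hne {Hv1 Hp1 Hg1} => [|x v1] //= _; rewrite map_cat.
-
  case: a b Hok => [a|] [b|] //; case/andP => /andP [/isCallP Ha /isRetP Hb] /eqP -> /=.
  have Hgen : forall v1, WM kind v1 -> phi v1 = P1 ->
      Lsem (Some (be, true, nestf a P1 b, C))
        ((if be then [::] else [:: emb (fr (C (nestf a P1 b (q0 A))))]) ++
         map emb (outs (comp C (phi [:: b])) v1) ++ [:: emb (fr (C (phi [:: b] (q0 A))))]).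
    move=> v1 Hv1 Hp1; exists (a :: rcons v1 b); split; first exact: WM_nest.
    rewrite phi_nest // Hp1; split => //.
    rewrite outs_nest // phi_nest // Hp1.
    by case: be => /=; rewrite ?map_cat.
  case: be Hgen => Hgen /=.
  + move=> [u1 [w1 [-> [[v1 [Hv1 [Hp1 Hu1]]] [w' [-> ->]]]]]].
    by have := Hgen v1 Hv1 Hp1; rewrite Hu1.
  + move=> [w0 [-> [u1 [w1 [-> [[v1 [Hv1 [Hp1 Hu1]]] [w' [-> ->]]]]]]]].
    by have := Hgen v1 Hv1 Hp1; rewrite Hu1.
-
  case: b Hok => [b|] //; case/andP => /isRetP Hb /eqP -> /=.
  have Hgen : forall v1, Desc kind v1 -> phi v1 = P1 ->
      Lsem (Some (be, false, comp P1 (phi [:: b]), C))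
        ((if be then [::] else [:: emb (fr (C (comp P1 (phi [:: b]) (q0 A))))]) ++
         map emb (outs C v1)).
    move=> v1 Hv1 Hp1; exists (b :: v1); split; first exact: D_ret.
    have Hpb : phi (b :: v1) = comp P1 (phi [:: b]).
      by rewrite -Hp1 -(phi_cat v1 (goodr1 (b := b) _)) // Hb.
    rewrite Hpb; split => //.
    by case: be => //=; rewrite Hpb.
  case: be Hgen => Hgen /=.
  + move=> [u1 [w1 [-> [[v1 [Hv1 [Hp1 Hu1]]] ->]]]].
    by have := Hgen v1 Hv1 Hp1; rewrite Hu1 cats0.
  + move=> [w0 [-> [u1 [w1 [-> [[v1 [Hv1 [Hp1 Hu1]]] ->]]]]]].
    by have := Hgen v1 Hv1 Hp1; rewrite Hu1 cats0.
-
  exact: Hstart.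
Qed.


Local Notation Der := (@derives T' gram).

Lemma der1 x s w : Der s w -> Der (inr x :: s) (x :: w).
Proof. exact: der_t. Qed.

Lemma der0 : Der [::] [::].
Proof. exact: der_nil. Qed.

Lemma compl_WM v : WM kind v -> forall C,
  Der [:: inl (Some (false, true, phi v, C))] (map emb (outs C v)) /\
  (v <> [::] -> Der [:: inl (Some (true, true, phi v, C))] (map emb (behead (outs C v)))).
Proof.
elim=> {v} [|a Ha|u v Hu IHu Hv IHv|a u b Ha Hb Hu IH] C.
- split; last by move=> /(_ erefl).
  apply: (derives_rule (r := (@Ordinal 6 0 isT, false, true, phi [::], C, idf, idf, None, None))) => /=.
  + by rewrite phi_nil.
  + exact: der0.
- have Hok : forall be, ok (@Ordinal 6 1 isT, be, true, phi [:: a], C, idf, idf, Some a, None).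
    by move=> be /=; rewrite /isInt Ha eqxx.
  split => [|_].
  + apply: (derives_rule (Hok false)) => /=; apply: der1; exact: der0.
  + apply: (derives_rule (Hok true)) => /=; exact: der0.
- have Hgu := WM_good Hu.
  have Hok : forall be, ok (@Ordinal 6 2 isT, be, true, phi (u ++ v), C, phi u, phi v, None, None).
    by move=> be /=; rewrite phi_cat // eqxx.
  split => [|Hne].
  + apply: (derives_rule (Hok false)) => /=.
    rewrite outs_cat // map_cat.
    exact: (derives_cat (IHu (comp C (phi v))).1 (IHv C).1).
  + case: u Hu IHu Hgu Hok Hne => [|x u] Hu IHu Hgu Hok Hne.
      by apply: (IHv C).2.
    apply: (derives_rule (Hok true)) => /=.
    have E : outs C (u ++ v) = outs (comp C (phi v)) u ++ outs C v.
      by have := outs_cat C v Hgu; move/(congr1 behead).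
    rewrite E map_cat.
    exact: (derives_cat ((IHu (comp C (phi v))).2 ltac:(done)) (IHv C).1).
- have Hok : forall be, ok (@Ordinal 6 3 isT, be, true, phi (a :: rcons u b), C, phi u, idf, Some a, Some b).
    by move=> be /=; rewrite /isCall /isRet Ha Hb phi_nest // eqxx.
  have Hd : Der [:: inl (Some (false, true, phi u, comp C (phi [:: b]))); inr (emb (fr (C (phi [:: b] (q0 A)))))]
     (map emb (outs (comp C (phi [:: b])) u) ++ [:: emb (fr (C (phi [:: b] (q0 A))))]).
    exact: (derives_cat (s1 := [:: inl _]) (IH _).1 (der1 _ der0)).
  split => [|_].
  + apply: (derives_rule (Hok false)).
    rewrite outs_nest //= map_cat; apply: der1; exact: Hd.
  + apply: (derives_rule (Hok true)).
    rewrite outs_nest //= map_cat; exact: Hd.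
Qed.

Lemma compl_Desc v : Desc kind v -> forall C,
  Der [:: inl (Some (false, false, phi v, C))] (map emb (outs C v)).
Proof.
elim=> {v} [|u v Hu Hv IHv|b v Hb Hv IHv] C.
- apply: (derives_rule (r := (@Ordinal 6 0 isT, false, false, phi [::], C, idf, idf, None, None))) => /=.
  + by rewrite phi_nil.
  + exact: der0.
- have Hgu := WM_good Hu.
  apply: (derives_rule (r := (@Ordinal 6 2 isT, false, false, phi (u ++ v), C, phi u, phi v, None, None))) => /=.
  + by rewrite phi_cat // eqxx.
  + rewrite outs_cat // map_cat.
    exact: (derives_cat (compl_WM Hu (comp C (phi v))).1 (IHv C)).
- have Hpb : phi (b :: v) = comp (phi v) (phi [:: b]).
    by rewrite -(phi_cat v (goodr1 (b := b) _)) // Hb.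
  apply: (derives_rule (r := (@Ordinal 6 4 isT, false, false, phi (b :: v), C, phi v, idf, None, Some b))) => /=.
  + by rewrite /isRet Hb Hpb eqxx.
  + apply: der1; exact: (IHv C).
Qed.

End Grammar.


Local Notation ntT := (option (bool * bool * {ffun Q A -> Q A} * {ffun Q A -> Q A})).

Lemma S0_cf : context_free (@S0 Sigma kind A rkG rkQ).
Proof.
pose srhs := fun P => [:: inl (Some (false, false, P, idf))] : seq (ntT + Q A).
pose Lst := fun u => exists v, Desc kind v /\ u = outs idf v.
exists (gram id srhs) => w; split.
- move=> [v [Hv Hs]]; have Hg := Desc_good Hv.
  move/(sigma0_iff _ Hg): Hs => ->.
  apply: (derives_rule (r := (@Ordinal 6 5 isT, false, false, phi v, idf, idf, idf, None, None))) => //=.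
  rewrite -[outs idf v]map_id; exact: compl_Desc.
- move=> Hd.
  have Hst : forall P u, sem (Lsem id Lst) (srhs P) u -> Lst u.
    by move=> P u /= [u1 [w1 [-> [[v [Hv [_ ->]]] ->]]]]; exists v; rewrite cats0 map_id.
  have := derives_sem (closure Hst) Hd.
  move=> /= [u1 [w1 [-> [[v [Hv ->]] ->]]]]; rewrite cats0.
  exists v; split => //; apply/sigma0_iff => //; exact: Desc_good.
Qed.

Lemma S1_cf : context_free (@S1 Sigma kind A rkG rkQ).
Proof.
pose srhs := fun P => [:: inr (inr P); inl (Some (true, true, P, idf))]
   : seq (ntT + (Q A + {ffun Q A -> Q A})%type).
pose Lst := fun (t : seq (Q A + {ffun Q A -> Q A})%type) => exists v, [/\ WM kind v, v <> [::] &
   t = inr (phi v) :: map inl (behead (outs idf v))].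
exists (gram inl srhs) => w; split.
- move=> [v [s [Hv Hne Hs ->]]]; have Hg := WM_good Hv.
  move/(sigma0_iff _ Hg): Hs => ->.
  apply: (derives_rule (r := (@Ordinal 6 5 isT, false, false, phi v, idf, idf, idf, None, None))) => //=.
  apply: der_t; exact: ((compl_WM inl srhs Hv idf).2 Hne).
- move=> Hd.
  have Hst : forall P u, sem (Lsem inl Lst) (srhs P) u -> Lst u.
    move=> P u /= [w' [-> [u1 [w1 [-> [[v [Hv [<- [Hne ->]]]] ->]]]]]].
    by exists v; rewrite cats0.
  have := derives_sem (closure Hst) Hd.
  move=> /= [u1 [w1 [-> [[v [Hv Hne ->]] ->]]]]; rewrite cats0.
  exists v, (outs idf v); split => //; apply/sigma0_iff => //; exact: WM_good.
Qed.

End Proof.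

Theorem lemma10 (Sigma : finType) (kind : Sigma -> letter_kind) (A : vpa kind)
  (rkG : G A -> nat) (rkQ : Q A -> nat) (HrkG : injective rkG) (HrkQ : injective rkQ) :
  context_free (@S0 Sigma kind A rkG rkQ) /\ context_free (@S1 Sigma kind A rkG rkQ).
Proof. split; [exact: S0_cf | exact: S1_cf]. Qed.
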